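(* Let $g\in W(\mathsf D_n)$ act on $\mathrm{Pic}(\bar X)=\bigoplus_{i=-1}^n\mathbb Z l_i$ via $\Phi$, and suppose the cyclic group $\langle g\rangle$ satisfies the (H1) condition, i.e. $\mathrm H^1(\langle g^i\rangle,\mathrm{Pic}(\bar X))=0$ for all $i$. If $\beta$ is a signed permutation cycle of $g$ with $\sigma(\beta)=-1$, then the underlying cycle $pr(\beta)$ has length at most $2$, and there is at most one such signed permutation cycle (with $\sigma(\beta)=-1$) of length $2$. Consequently, up to conjugation, $g$ is of one of the following three types: (1) $g=c_1c_2\beta_3\cdots\beta_R$; (2) $g=c_1c_2(2\ 3)\beta_3\cdots\beta_R$; (3) $g=\beta_1\cdots\beta_R$; where in each case the $\beta_i$ are signed permutation cycles, disjoint from one another and from the displayed indices, with $\sigma(\beta_i)=1$ for all $i$.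
   Context: $W(\mathsf B_n)$ is the group of signed permutations of the symbols $j^\pm$ ($j=1,\dots,n$), generated by $\mathfrak S_n$ and involutions $c_j$ exchanging $j^+,j^-$; each element is $c_{j_1}\cdots c_{j_t}\tau$, $\tau\in\mathfrak S_n$; $pr(c_{j_1}\cdots c_{j_t}\tau)=\tau$; $\sigma(c_{j_1}\cdots c_{j_t}\tau)=(-1)^t$; $W(\mathsf D_n)=\ker\sigma$. Decomposing $\tau$ into disjoint cycles $\gamma$ (including fixed points), the signed permutation cycles of $g$ are $\beta_\gamma=(\prod_{j_i\in\mathrm{supp}\,\gamma}c_{j_i})\gamma$, with $pr(\beta_\gamma)=\gamma$. $\mathrm{Pic}(\bar X)$ has basis $l_{-1},l_0,\dots,l_n$; for $g=c_{j_1}\cdots c_{j_t}\tau$ ($t$ even), $s(i)=-1$ if $i\in\{j_1,\dots,j_t\}$ else $1$, and $\Phi(g)l_0=l_0$, $\Phi(g)l_{-1}=l_{-1}+\frac t2l_0-\sum_{s(i)=-1}l_i$, and for $v\ge1$, $u=\tau^{-1}(v)$: $\Phi(g)l_v=l_u$ if $s(u)=1$, $\Phi(g)l_v=l_0-l_u$ if $s(u)=-1$. *)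

(* Defs.v *)
From mathcomp Require Import all_boot all_order all_fingroup all_algebra.
Set Implicit Arguments. Unset Strict Implicit. Unset Printing Implicit Defensive.
Import GRing.Theory.
Local Open Scope ring_scope.

(* Symbols j^+ / j^- : (j, true) is j^+, (j, false) is j^-.
   The symbols 1..n of the paper are the ordinals 0..n-1 of 'I_n. *)
Definition symb (n : nat) := ('I_n * bool)%type.

Section Weyl.
Variable n : nat.

Definition flip (x : symb n) : symb n := (x.1, ~~ x.2).

(* Products are MathComp's ([a * b] = first a, then b), so that
   g = c_{j1} ... c_{jt} tau means: first flip the signs at j1..jt, then tau. *)
Definition WB : {set {perm symb n}} :=
  [set g : {perm symb n} | [forall x, g (flip x) == flip (g x)]].

Definition cc (j : 'I_n) : {perm symb n} := tperm (j, true) (j, false).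

Definition sw (j k : 'I_n) : {perm symb n} :=
  tperm (j, true) (k, true) * tperm (j, false) (k, false).

(* For g = c_{j1}...c_{jt} tau : g (u^+) = tau(u)^{s(u)}. *)
Definition tau (g : {perm symb n}) (u : 'I_n) : 'I_n := (g (u, true)).1.
(* the set {j1,...,jt} = {u | s(u) = -1} *)
Definition negs (g : {perm symb n}) : {set 'I_n} :=
  [set u | ~~ (g (u, true)).2].

Definition sigma (g : {perm symb n}) : int := (-1) ^+ #|negs g|.

Definition WD : {set {perm symb n}} := [set g in WB | sigma g == 1].

(* Supports of the cycles gamma of pr(g) = tau (fixed points included). *)
Definition cyc_of (g : {perm symb n}) (u : 'I_n) : {set 'I_n} :=
  [set v | fconnect (tau g) u v].
Definition cycles (g : {perm symb n}) : {set {set 'I_n}} :=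
  [set cyc_of g u | u : 'I_n].

(* For the signed permutation cycle beta_gamma = (prod_{j in supp gamma} c_j) gamma
   with S = supp gamma: sigma(beta_gamma) and the length of pr(beta_gamma) = gamma. *)
Definition sigma_cyc (g : {perm symb n}) (S : {set 'I_n}) : int :=
  (-1) ^+ #|S :&: negs g|.
Definition len_cyc (S : {set 'I_n}) : nat := #|S|.

(* Pic(Xbar) = Z^(n+2) with basis l_{-1}, l_0, l_1, ..., l_n:
   index 0 <-> l_{-1}, index 1 <-> l_0, index k+2 <-> l_{k+1} (k : 'I_n). *)
Definition Lm1 : 'I_n.+2 := ord0.
Definition L0 : 'I_n.+2 := lift ord0 ord0.
Definition Lsym (k : 'I_n) : 'I_n.+2 := lift ord0 (lift ord0 k).
Definition e (i : 'I_n.+2) : 'cV[int]_n.+2 := delta_mx i 0.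

(* Phi(g) l_j, following the paper (t = #|negs g|).  For v >= 1, u = tau^{-1}(v)
   and s(u) are read off g^-1 (v^+) = u^{s(u)}. *)
Definition phisym (g : {perm symb n}) (v : 'I_n) : 'cV[int]_n.+2 :=
  let y := (g^-1)%g (v, true) in
  if y.2 then e (Lsym y.1) else e L0 - e (Lsym y.1).

Definition phicol (g : {perm symb n}) (j : 'I_n.+2) : 'cV[int]_n.+2 :=
  if j == Lm1 then
    e Lm1 + ((#|negs g|)./2)%:R *: e L0 - \sum_(i in negs g) e (Lsym i)
  else if j == L0 then e L0
  else \sum_(v : 'I_n | j == Lsym v) phisym g v. (* the unique v with j = Lsym v *)

Definition Phi (g : {perm symb n}) : 'M[int]_n.+2 :=
  \matrix_(i, j) phicol g j i 0.

Definition H1_vanish (G : {set {perm symb n}}) : Prop :=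
  forall f : {perm symb n} -> 'cV[int]_n.+2,
    (forall a b, a \in G -> b \in G -> f (a * b)%g = f a + Phi a *m f b) ->
    exists m : 'cV[int]_n.+2, forall a, a \in G -> f a = Phi a *m m - m.

Definition all_cyc_even (b : {perm symb n}) : Prop :=
  forall S, S \in cycles b -> sigma_cyc b S = 1.

Definition fixes_idx (b : {perm symb n}) (j : 'I_n) : Prop :=
  b (j, true) = (j, true) /\ b (j, false) = (j, false).

End Weyl.

(* Main.v *)
Require Import Defs.
From mathcomp Require Import all_boot all_order all_fingroup all_algebra.
From mathcomp Require Import zify.
Set Implicit Arguments. Unset Strict Implicit. Unset Printing Implicit Defensive.
Import GRing.Theory.
Local Open Scope ring_scope.

Section Basics.
Variable n : nat.
Implicit Types (g h a b : {perm symb n}) (u w : 'I_n).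

Definition WBp g := forall x, g (flip x) = flip (g x).

Lemma inWB g : (g \in WB n) <-> WBp g.
Proof.
rewrite inE; split => [/forallP H x|H]; first by apply/eqP/H.
by apply/forallP => x; rewrite H.
Qed.

Lemma flipK : involutive (@flip n).
Proof. by case=> u b; rewrite /flip /= negbK. Qed.

Lemma gT g u : WBp g -> g (u, true) = (tau g u, ~~ (u \in negs g)).
Proof. by move=> _; rewrite inE negbK /tau; case: (g (u,true)). Qed.

Lemma gF g u : WBp g -> g (u, false) = (tau g u, u \in negs g).
Proof.
move=> H; have -> : (u, false) = flip (u, true) by [].
by rewrite H gT // /flip /= negbK.
Qed.

Lemma gE g u (c : bool) : WBp g -> g (u, c) = (tau g u, c != (u \in negs g)).
Proof. by move=> H; case: c; rewrite ?gT ?gF //; case: (u \in negs g). Qed.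

Lemma tau_inj g : WBp g -> injective (tau g).
Proof.
move=> H u w E.
have : g (w, (w \in negs g) == (u \in negs g)) = g (u, true).
  rewrite !gE // E; congr (_, _).
  by case: (w \in negs g); case: (u \in negs g).
by move/perm_inj => [].
Qed.

Lemma WBpM a b : WBp a -> WBp b -> WBp (a * b)%g.
Proof. by move=> Ha Hb x; rewrite !permM Ha Hb. Qed.

Lemma WBpV a : WBp a -> WBp (a^-1)%g.
Proof.
move=> Ha x; apply: (@perm_inj _ a); rewrite Ha !permKV //.
Qed.

Lemma WBp1 : WBp 1%g.
Proof. by move=> x; rewrite !perm1. Qed.

Lemma WBpX a k : WBp a -> WBp (a ^+ k)%g.
Proof. move=> Ha; elim: k => [|k IH]; first by rewrite expg0; apply: WBp1.
by rewrite expgS; apply: WBpM. Qed.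


Lemma swE j k u (c : bool) :
  sw j k (u, c) = (if u == j then k else if u == k then j else u, c).
Proof.
rewrite /sw permM !permE /= !xpair_eqE.
have [?|nj] := eqVneq u j; have [?|nk] := eqVneq u k; subst;
  rewrite ?eqxx /= ?andbT ?andbF /=; case: c => /=;
  rewrite ?xpair_eqE ?eqxx ?andbT ?andbF ?(negbTE nj) ?(negbTE nk) /=; 
  try by [].
Qed.

Lemma ccE j u (c : bool) : cc j (u, c) = (u, if u == j then ~~ c else c).
Proof.
rewrite /cc !permE /= !xpair_eqE.
have [->|nj] := eqVneq u j; case: c => //=.
Qed.

Lemma WBp_sw j k : WBp (sw j k).
Proof. by case=> u c; rewrite /flip !swE. Qed.

Lemma WBp_cc j : WBp (cc j).
Proof. by case=> u c; rewrite /flip !ccE /=; case: (u == j). Qed.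

End Basics.

Section Cyc.
Variable n : nat.
Implicit Types (g h a b : {perm symb n}) (u v w : 'I_n).

Lemma iter_fst g k u (c : bool) : WBp g ->
  (iter k g (u, c)).1 = iter k (tau g) u.
Proof.
move=> H; elim: k => [|k IH] //=.
by case: (iter k g (u,c)) IH => w c' /= ->; rewrite gE.
Qed.

Lemma iter_flip g k x : WBp g -> iter k g (flip x) = flip (iter k g x).
Proof. by move=> H; elim: k => [|k IH] //=; rewrite IH H. Qed.

Lemma fconnect_flip g x y : WBp g -> fconnect g x y -> fconnect g (flip x) (flip y).
Proof.
move=> H /iter_findex <-; rewrite -iter_flip //; exact: fconnect_iter.
Qed.

Lemma cyc_refl g u : u \in cyc_of g u.
Proof. by rewrite inE connect0. Qed.

Lemma cyc_tau g u v : WBp g -> (tau g v \in cyc_of g u) = (v \in cyc_of g u).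
Proof. by move=> H; rewrite !inE -same_fconnect1_r //; exact: tau_inj. Qed.

Lemma cyc_eq g u v : WBp g -> v \in cyc_of g u -> cyc_of g v = cyc_of g u.
Proof.
move=> H; rewrite inE => uv; apply/setP => w; rewrite !inE.
apply/idP/idP => [vw|uw]; first exact: connect_trans uv vw.
by rewrite fconnect_sym in uv; [exact: connect_trans uv uw | exact: tau_inj].
Qed.

Lemma cycles_disj g S1 S2 w : WBp g -> S1 \in cycles g -> S2 \in cycles g ->
  w \in S1 -> w \in S2 -> S1 = S2.
Proof.
move=> H /imsetP[u1 _ ->] /imsetP[u2 _ ->] w1 w2.
by rewrite -(cyc_eq H w1) -(cyc_eq H w2).
Qed.

Lemma cyc_fixed g u : tau g u = u -> cyc_of g u = [set u].
Proof.
move=> fu; apply/setP => v; rewrite !inE; apply/idP/idP => [/iter_findex <-|/eqP->].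
  by elim: (findex _ u v) => //= k /eqP ->; rewrite fu.
exact: connect0.
Qed.

Lemma cyc_sym_exists g u v : WBp g -> v \in cyc_of g u ->
  exists c : bool, fconnect g (u, true) (v, c).
Proof.
move=> H; rewrite inE => /iter_findex E.
set k := findex _ u v in E.
have Hz := fconnect_iter g k (u, true).
have E1 : (iter k g (u,true)).1 = v by rewrite iter_fst.
move: Hz E1; case: (iter k g (u,true)) => w c /= Hz <-; by exists c.
Qed.

Lemma cycles_mem g S : S \in cycles g -> exists u, S = cyc_of g u.
Proof. by case/imsetP => u _ ->; exists u. Qed.

End Cyc.

Definition sgn (c : bool) : int := if c then -1 else 1.

Lemma sgn_neq a b : sgn (a != b) = sgn a * sgn b.
Proof. by case: a; case: b; rewrite /sgn /= ?mulN1r ?mul1r ?opprK. Qed.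

Lemma sgn_sq a : sgn a * sgn a = 1.
Proof. by case: a; rewrite /sgn ?mulN1r ?opprK ?mul1r. Qed.

Section Sgn.
Variable n : nat.
Implicit Types (g h a b : {perm symb n}) (u v w : 'I_n).

Lemma prod_sgn (S N : {set 'I_n}) :
  \prod_(w in S) sgn (w \in N) = (-1) ^+ #|S :&: N|.
Proof.
rewrite -big_mkcondr /= -prodr_const; apply: eq_bigl => w.
by rewrite inE.
Qed.

Lemma big_reindex_closed (R : Type) (idx : R) (op : Monoid.com_law idx)
  (f : 'I_n -> 'I_n) (S : {set 'I_n}) (F : 'I_n -> R) :
  injective f -> (forall u, (f u \in S) = (u \in S)) ->
  \big[op/idx]_(w in S) F (f w) = \big[op/idx]_(w in S) F w.
Proof.
move=> finj fS; rewrite [RHS](reindex_inj finj); apply: eq_bigl => w.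
by rewrite fS.
Qed.

Lemma neg_cycle_conn g u : WBp g -> odd #|cyc_of g u :&: negs g| ->
  fconnect g (u, true) (u, false).
Proof.
move=> H oddS; apply: contraT => /negP F0; exfalso.
set S := cyc_of g u.
have ginj : injective g := @perm_inj _ g.
have two : forall w (c : bool), fconnect g (u, true) (w, c) ->
    fconnect g (u, true) (w, ~~ c) -> False.
  move=> w c h1 h2; apply: F0.
  have h3 := fconnect_flip H h2; rewrite /flip /= negbK in h3.
  rewrite fconnect_sym // in h3; exact: connect_trans h1 h3.
set sig := fun w => fconnect g (u, true) (w, true).
have C1 : forall w, w \in S -> fconnect g (u, true) (w, false) = ~~ sig w.
  move=> w wS; have [c hc] := cyc_sym_exists H wS.
  rewrite /sig; case: c hc => hc.
    by rewrite hc /=; apply/negP => h2; apply: (two w true).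
  by rewrite hc; symmetry; apply/negP => h2; apply: (two w false).
have C2 : forall w, w \in S -> (w \in negs g) = (sig w != sig (tau g w)).
  move=> w wS; rewrite /sig same_fconnect1_r // gT //.
  have tS : tau g w \in S by rewrite cyc_tau.
  case: (w \in negs g) => /=.
    by rewrite C1 // /sig /=; case: (fconnect g (u, true) (tau g w, true)).
  by case: (fconnect g (u, true) (tau g w, true)).
have E1 := prod_sgn S (negs g).
have E2 : \prod_(w in S) sgn (w \in negs g) = 1.
  rewrite (eq_bigr (fun w => sgn (sig w) * sgn (sig (tau g w)))); last first.
    by move=> w wS; rewrite C2 // sgn_neq.
  rewrite big_split /= (big_reindex_closed _ (fun w => sgn (sig w)) (tau_inj H));
    last by move=> w; rewrite cyc_tau.
  rewrite -big_split /=; apply: big1 => w _; exact: sgn_sq.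
by move: E1; rewrite E2 -signr_odd oddS /= => /eqP.
Qed.
End Sgn.

Section NegPow.
Variable n : nat.
Implicit Types (g h a b : {perm symb n}) (u v w : 'I_n).

Lemma neg_pow g u : WBp g -> fconnect g (u, true) (u, false) ->
  exists j, forall w, w \in cyc_of g u -> (g ^+ j)%g (w, true) = (w, false).
Proof.
move=> H F; exists (findex g (u,true) (u,false)) => w wS.
have hj := iter_findex F; set j := findex _ _ _ in hj *.
have HX : WBp (g ^+ j)%g by apply: WBpX.
have [c /iter_findex hk] := cyc_sym_exists H wS; set k := findex _ _ _ in hk.
have E : (g ^+ j)%g (w, c) = (w, ~~ c).
  rewrite permX -hk -iterD addnC iterD hj.
  have -> : ((u, false) : symb n) = flip (u, true) by [].
  by rewrite iter_flip // hk.
clear k hk; case: c E => // E.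
have -> : ((w, true) : symb n) = flip (w, false) by [].
by rewrite HX E.
Qed.

Lemma negfix g w : WBp g -> g (w, true) = (w, false) ->
  tau g w = w /\ w \in negs g.
Proof. by move=> H; rewrite gT // => -[-> /negbFE]. Qed.

End NegPow.

Section Mat.
Variable n : nat.
Implicit Types (g h a b : {perm symb n}) (u v w : 'I_n).
Implicit Types (T : {set 'I_n}).

Lemma PhiE a j : Phi a *m e j = phicol a j.
Proof.
rewrite /e -colE; apply/matrixP => i k; rewrite !mxE.
by rewrite (ord1 k).
Qed.

Lemma Lsym_inj : injective (@Lsym n).
Proof. by move=> u w /lift_inj /lift_inj. Qed.

Lemma Lsym_neqm1 u : (Lsym u == Lm1 n) = false.
Proof. by []. Qed.

Lemma Lsym_neq0 u : (Lsym u == L0 n) = false.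
Proof. by []. Qed.

Lemma L0_neqm1 : (L0 n == Lm1 n) = false.
Proof. by []. Qed.

Lemma phicol_sym a u : phicol a (Lsym u) = phisym a u.
Proof.
rewrite /phicol Lsym_neqm1 Lsym_neq0.
by rewrite (big_pred1 u) // => v /=.
Qed.

Lemma phicol_L0 a : phicol a (L0 n) = e (L0 n).
Proof. by rewrite /phicol L0_neqm1 eqxx. Qed.

Lemma PhiE_sym a u : Phi a *m e (Lsym u) = phisym a u.
Proof. by rewrite PhiE phicol_sym. Qed.

Lemma PhiE_L0 a : Phi a *m e (L0 n) = e (L0 n).
Proof. by rewrite PhiE phicol_L0. Qed.

Lemma phisym_hom a b u : WBp a ->
  phisym (a * b)%g u = Phi a *m phisym b u.
Proof.
move=> Ha; rewrite /phisym invMg permM.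
case: ((b^-1)%g (u, true)) => p [] /=.
  by rewrite PhiE_sym /phisym.
have -> : ((p, false) : symb n) = flip (p, true) by [].
rewrite (WBpV Ha) mulmxBr PhiE_L0 PhiE_sym /phisym.
case: ((a^-1)%g (p, true)) => q [] //=.
by rewrite subKr.
Qed.

Lemma phisym1 u : phisym 1%g u = e (Lsym u).
Proof. by rewrite /phisym invg1 perm1. Qed.

Definition vT (T : {set 'I_n}) : 'cV[int]_n.+2 := \sum_(w in T) e (Lsym w).

Lemma Phi_hom_vT a b T : WBp a ->
  Phi (a * b)%g *m vT T = Phi a *m (Phi b *m vT T).
Proof.
move=> Ha; rewrite /vT !mulmx_sumr; apply: eq_bigr => w _.
by rewrite !PhiE_sym phisym_hom.
Qed.

Lemma Phi1_vT T : Phi 1%g *m vT T = vT T.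
Proof. by rewrite /vT mulmx_sumr; apply: eq_bigr => w _; rewrite PhiE_sym phisym1. Qed.

Lemma hinv_tau h u : WBp h -> (h^-1)%g (tau h u, true) = (u, ~~ (u \in negs h)).
Proof.
move=> H; apply: (@perm_inj _ h); rewrite permKV gE //.
by congr (_, _); case: (u \in negs h).
Qed.

Lemma Phi_vT_even h T : WBp h -> (forall u, (tau h u \in T) = (u \in T)) ->
  ~~ odd #|T :&: negs h| -> exists D, Phi h *m vT T - vT T = D *+ 2.
Proof.
move=> H cl ev.
rewrite /vT mulmx_sumr.
rewrite (eq_bigr (fun w => phisym h w)); last by move=> w _; rewrite PhiE_sym.
rewrite -(big_reindex_closed _ (phisym h) (tau_inj H) cl).
rewrite (eq_bigr (fun u => e (Lsym u) +
   ((if u \in negs h then e (L0 n) else 0) - (if u \in negs h then e (Lsym u) else 0) *+ 2)));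
  last first.
  move=> u _; rewrite /phisym hinv_tau //=.
  case: (u \in negs h) => /=; last by rewrite mul0rn subr0 addr0.
  by rewrite mulr2n opprD addrCA addNKr.
rewrite big_split /= addrAC subrr add0r big_split /= sumrN.
have E1 : \sum_(i in T) (if i \in negs h then e (L0 n) else 0) =
    e (L0 n) *+ #|T :&: negs h|.
  rewrite -big_mkcondr /= -sumr_const.
  by apply: eq_bigl => i /=; rewrite in_setI.
rewrite E1.
have [k ->] : exists k : nat, #|T :&: negs h| = muln k 2.
  by exists (divn #|T :&: negs h| 2); rewrite divnK // dvdn2.
exists (e (L0 n) *+ k - \sum_(i in T) (if i \in negs h then e (Lsym i) else 0)).
by rewrite mulrnBl mulrnA sumrMnl.
Qed.

End Mat.

Section Row.
Variable n : nat.
Implicit Types (g h a b : {perm symb n}) (u v w : 'I_n).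
Implicit Types (T : {set 'I_n}).

Lemma eE (i j : 'I_n.+2) : e j i 0 = (i == j)%:R.
Proof. by rewrite /e mxE eqxx andbT. Qed.

Lemma Lm1_entry a u : phicol a (Lm1 n) (Lsym u) 0 = - (u \in negs a)%:R.
Proof.
rewrite /phicol eqxx !mxE summxE Lsym_neqm1 Lsym_neq0 /= mulr0 addr0 add0r.
congr (- _).
case: (boolP (u \in negs a)) => Hu.
  rewrite (bigD1 u) //= eE eqxx big1 ?addr0 // => i /andP[_ iu].
  by rewrite eE (inj_eq (@Lsym_inj n)) eq_sym (negbTE iu).
rewrite big1 // => i iN; rewrite eE (inj_eq (@Lsym_inj n)).
by case: eqP => // E; rewrite E iN in Hu.
Qed.

Lemma sym_entry a u k : WBp a ->
  phicol a (Lsym k) (Lsym u) 0 =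
  if k == tau a u then sgn (u \in negs a) else 0.
Proof.
move=> H; rewrite phicol_sym.
case: eqP => [->|nk].
  rewrite /phisym hinv_tau //=; case: (u \in negs a) => /=.
    by rewrite !mxE Lsym_neq0 !eqxx /= add0r.
  by rewrite eE eqxx.
rewrite /phisym.
case E: ((a^-1)%g (k, true)) => [p c].
have Ep : tau a p = k.
  have := f_equal (fun z => (a z).1) E; rewrite permKV /= gE //.
have up : (Lsym u == Lsym p) = false.
  rewrite (inj_eq (@Lsym_inj n)); apply/eqP => up; apply: nk.
  by rewrite -Ep up.
case: c E => _ /=; first by rewrite eE up.
by rewrite !mxE Lsym_neq0 up /= subrr.
Qed.

Lemma PhiEntry a (i j : 'I_n.+2) : Phi a i j = phicol a j i 0.
Proof. by rewrite mxE. Qed.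

Lemma row_Lsym a (x : 'cV[int]_n.+2) u : WBp a ->
  (Phi a *m x) (Lsym u) 0 =
  - ((u \in negs a)%:R * x (Lm1 n) 0) + sgn (u \in negs a) * x (Lsym (tau a u)) 0.
Proof.
move=> H; rewrite mxE big_ord_recl big_ord_recl !PhiEntry.
have -> : \sum_(i < n) Phi a (Lsym u) (lift ord0 (lift ord0 i)) *
      x (lift ord0 (lift ord0 i)) 0 =
    \sum_(k < n) phicol a (Lsym k) (Lsym u) 0 * x (Lsym k) 0.
  by apply: eq_bigr => k _; rewrite PhiEntry.
have -> : phicol a ord0 = phicol a (Lm1 n) by [].
have -> : x ord0 0 = x (Lm1 n) 0 by [].
have -> : phicol a (lift ord0 ord0) = phicol a (L0 n) by [].
rewrite Lm1_entry phicol_L0 eE Lsym_neq0 mul0r add0r mulNr.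
congr (_ + _).
rewrite (bigD1 (tau a u)) //= sym_entry // eqxx big1 ?addr0 // => k /negbTE nk.
by rewrite sym_entry // nk mul0r.
Qed.

End Row.

Section H1.
Variable n : nat.
Implicit Types (g h a b : {perm symb n}) (u v w : 'I_n).
Implicit Types (T : {set 'I_n}).

Definition half (X : 'cV[int]_n.+2) : 'cV[int]_n.+2 :=
  map_mx (fun z : int => (z %/ 2)%Z) X.

Lemma halfK D : half (D *+ 2) = D.
Proof.
apply/matrixP => i j; rewrite mxE mulmxnE -(mulr_natr (D i j) 2) mulzK //.
Qed.

Lemma mulmx2 (A : 'M[int]_n.+2) (B : 'cV[int]_n.+2) : A *m (B *+ 2) = (A *m B) *+ 2.
Proof. by rewrite !mulr2n mulmxDr. Qed.

Lemma vT_entry T p : vT T (Lsym p) 0 = (p \in T)%:R.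
Proof.
rewrite /vT summxE.
case: (boolP (p \in T)) => Hp.
  rewrite (bigD1 p) //= eE eqxx big1 ?addr0 // => i /andP[_ ip].
  by rewrite eE (inj_eq (@Lsym_inj n)) eq_sym (negbTE ip).
rewrite big1 // => i iN; rewrite eE (inj_eq (@Lsym_inj n)).
by case: eqP => // E; rewrite E iN in Hp.
Qed.

Lemma H1_fail h T p q : WBp h -> (forall u, (tau h u \in T) = (u \in T)) ->
  ~~ odd #|T :&: negs h| -> p \in T -> q \notin T ->
  fconnect h (p, true) (p, false) -> fconnect h (q, true) (q, false) ->
  ~ H1_vanish (<[h]>%G : {set {perm symb n}}).
Proof.
move=> H cl ev pT qT Fp Fq H1.
pose M a := Phi a *m vT T - vT T.
have Mmul : forall a b, WBp a -> M (a * b)%g = Phi a *m M b + M a.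
  move=> a b Ha; rewrite /M Phi_hom_vT // mulmxBr addrA subrK //.
have Mpow : forall k, exists D, M (h ^+ k)%g = D *+ 2.
  elim=> [|k [D1 IH]].
    by exists 0; rewrite expg0 /M Phi1_vT subrr mul0rn.
  have [D2 E2] := Phi_vT_even H cl ev.
  exists (Phi h *m D1 + D2); rewrite expgS Mmul // IH.
  by rewrite mulmx2 mulrnDl -E2.
pose f a := half (M a).
have fE : forall a, a \in <[h]>%g -> M a = f a *+ 2.
  move=> a /cycleP[k ->]; rewrite /f; have [D ->] := Mpow k; by rewrite halfK.
have WG : forall a, a \in <[h]>%g -> WBp a.
  by move=> a /cycleP[k ->]; apply: WBpX.
have coc : forall a b, a \in <[h]>%g -> b \in <[h]>%g ->
    f (a * b)%g = f a + Phi a *m f b.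
  move=> a b aG bG; rewrite {1}/f (Mmul _ _ (WG a aG)) (fE b bG) (fE a aG) mulmx2.
  by rewrite -mulrnDl halfK addrC.
have [m Hm] := H1 f coc.
have Mh : M h = (Phi h *m m - m) *+ 2 by rewrite -Hm ?cycle_id // fE ?cycle_id.
pose x := vT T - m *+ 2.
have fixM : Phi h *m x = x.
  rewrite /x mulmxBr mulmx2.
  move: Mh; rewrite /M.
  move: (Phi h *m vT T) (Phi h *m m) (vT T) => P1 P2 V Mh.
  apply/matrixP => i j; have := congr1 (fun X : 'cV[int]_n.+2 => X i j) Mh.
  rewrite !(mxE, mulmxnE); move: (\sum_j0 _) (V i j) (P2 i j) (m i j) => S1 a1 a2 a3 E.
  lia.
pose c := x (Lm1 n) 0.
pose y u := x (Lsym u) 0 * 2 + c.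
have yE : forall u, y u = sgn (u \in negs h) * y (tau h u).
  move=> u; rewrite /y.
  have := row_Lsym x u H; rewrite fixM -/c => ->.
  case: (u \in negs h); rewrite /sgn /=; lia.
pose Y (z : symb n) := if z.2 then y z.1 else - y z.1.
have inv : forall z, Y (h z) = Y z.
  case=> u c'; rewrite gE // /Y /= (yE u).
  case: c'; case: (u \in negs h); rewrite /sgn /=; lia.
have inv' : invariant h Y =1 xpredT by move=> z; rewrite inE /= inv eqxx.
have Yp := fconnect_invariant inv' Fp.
have Yq := fconnect_invariant inv' Fq.
rewrite /Y /y /= in Yp Yq.
have xp : x (Lsym p) 0 = 1 - (m (Lsym p) 0 + m (Lsym p) 0).
  by rewrite /x !mxE vT_entry pT.
have xq : x (Lsym q) 0 = 0 - (m (Lsym q) 0 + m (Lsym q) 0).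
  by rewrite /x !mxE vT_entry (negbTE qT).
clearbody Y y c x.
move: Yp Yq xp xq; move: (x (Lsym p) 0) (x (Lsym q) 0) (m (Lsym p) 0) (m (Lsym q) 0) c.
move=> a1 a2 a3 a4 a5 *; lia.
Qed.
End H1.

Section Parts.
Variable n : nat.
Implicit Types (g h a b : {perm symb n}) (u v w : 'I_n).
Implicit Types (T S : {set 'I_n}).

Lemma sign_odd (k : nat) : ((-1) ^+ k = -1 :> int) -> odd k.
Proof. by rewrite -signr_odd; case: (odd k). Qed.

Lemma sign_1 (k : nat) : ((-1) ^+ k <> -1 :> int) -> (-1) ^+ k = 1 :> int.
Proof. by rewrite -signr_odd; case: (odd k). Qed.

Lemma three_negfix h S : WBp h -> (2 < #|S|)%N ->
  (forall w, w \in S -> h (w, true) = (w, false)) ->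
  ~ H1_vanish (<[h]>%G : {set {perm symb n}}).
Proof.
move=> H cS hS.
have [p1 p1S] : exists p1, p1 \in S by apply/card_gt0P; lia.
have c1 := cardsD1 p1 S; rewrite p1S in c1.
have [p2 p2S] : exists p2, p2 \in S :\ p1 by apply/card_gt0P; lia.
have c2 := cardsD1 p2 (S :\ p1); rewrite p2S in c2.
have [q qS] : exists q, q \in S :\ p1 :\ p2 by apply/card_gt0P; lia.
move: p2S qS; rewrite !inE => /andP[n21 p2S] /and3P[nq2 nq1 qS].
have [t1 m1] := negfix H (hS _ p1S); have [t2 m2] := negfix H (hS _ p2S).
apply: (@H1_fail n h [set p1; p2] p1 q H).
- move=> u; rewrite !inE.
  apply/idP/idP => /orP[]/eqP E; apply/orP.
  + by left; apply/eqP; apply: (tau_inj H); rewrite E t1.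
  + by right; apply/eqP; apply: (tau_inj H); rewrite E t2.
  + by left; rewrite E t1.
  + by right; rewrite E t2.
- have -> : [set p1; p2] :&: negs h = [set p1; p2].
    by apply/setIidPl/subsetP => w /set2P[] ->.
  by rewrite cards2 eq_sym n21.
- by rewrite !inE eqxx.
- by rewrite !inE negb_or nq1 nq2.
- by rewrite -(hS _ p1S); apply: fconnect1.
- by rewrite -(hS _ qS); apply: fconnect1.
Qed.

Lemma part1 g S : WBp g ->
  (forall i : nat, H1_vanish (<[(g ^+ i)%g]>%G : {set {perm symb n}})) ->
  S \in cycles g -> sigma_cyc g S = -1 -> (#|S| <= 2)%N.
Proof.
move=> H H1 /cycles_mem[u ->] /sign_odd od.
have F := neg_cycle_conn H od.
have [j Hj] := neg_pow H F.
rewrite leqNgt; apply/negP => c3.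
exact: (three_negfix (WBpX j H) c3 Hj (H1 j)).
Qed.

Lemma two_struct g u : WBp g -> #|cyc_of g u| = 2 ->
  [/\ tau g u != u, tau g (tau g u) = u & cyc_of g u = [set u; tau g u]].
Proof.
move=> H c2.
have tu : tau g u != u.
  apply/eqP => E; move: c2; rewrite cyc_fixed // cards1 //.
have sub : [set u; tau g u] \subset cyc_of g u.
  by apply/subsetP => w /set2P[] ->; rewrite ?cyc_tau // cyc_refl.
have E : cyc_of g u = [set u; tau g u].
  apply/esym/eqP; rewrite eqEcard sub c2 cards2 eq_sym tu //.
split => //.
have : tau g (tau g u) \in cyc_of g u by rewrite !cyc_tau // cyc_refl.
rewrite E => /set2P[] // E2.
by move/(tau_inj H): E2 => E2; rewrite E2 eqxx in tu.
Qed.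

Lemma card2I (a b : 'I_n) (N : {set 'I_n}) : a != b ->
  #|[set a; b] :&: N| = ((a \in N) + (b \in N))%N.
Proof.
move=> ab.
case Ha: (a \in N); case Hb: (b \in N).
- have -> : [set a; b] :&: N = [set a; b].
    by apply/setIidPl/subsetP => w /set2P[] ->.
  by rewrite cards2 ab.
- have -> : [set a; b] :&: N = [set a].
    apply/setP => w; rewrite !inE; case: (eqVneq w a) => [->|wa]; rewrite ?Ha //=.
    by case: (eqVneq w b) => [->|] //=; rewrite Hb.
  by rewrite cards1.
- have -> : [set a; b] :&: N = [set b].
    apply/setP => w; rewrite !inE; case: (eqVneq w b) => [->|wb]; rewrite ?Hb ?orbT //=.
    by case: (eqVneq w a) => [->|] //=; rewrite Ha.
  by rewrite cards1.
- have -> : [set a; b] :&: N = set0.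
    apply/setP => w; rewrite !inE.
    case: (eqVneq w a) => [->|wa]; first by rewrite Ha andbF.
    by case: (eqVneq w b) => [->|] //=; rewrite Hb andbF.
  by rewrite cards0.
Qed.

Lemma two_neg g u : WBp g -> #|cyc_of g u| = 2 -> odd #|cyc_of g u :&: negs g| ->
  (g ^+ 2)%g (u, true) = (u, false).
Proof.
move=> H c2; have [tu ttu E] := two_struct H c2.
rewrite E card2I 1?eq_sym // => od.
rewrite expgS expg1 permM gT // gE // ttu; congr (_, _).
move: od; case: (u \in negs g); case: (tau g u \in negs g) => //.
Qed.

Lemma cycles_neq_disj g S1 S2 : WBp g -> S1 \in cycles g -> S2 \in cycles g ->
  S1 != S2 -> S1 :&: S2 = set0.
Proof.
move=> H c1 c2 ne; apply/setP => w; rewrite !inE.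
apply/negP => /andP[w1 w2]; move/eqP: ne; apply.
exact: cycles_disj H c1 c2 w1 w2.
Qed.

Lemma part2 g S1 S2 : WBp g ->
  (forall i : nat, H1_vanish (<[(g ^+ i)%g]>%G : {set {perm symb n}})) ->
  S1 \in cycles g -> S2 \in cycles g ->
  sigma_cyc g S1 = -1 -> sigma_cyc g S2 = -1 ->
  #|S1| = 2%N -> #|S2| = 2%N -> S1 = S2.
Proof.
move=> H H1 c1 c2 /sign_odd o1 /sign_odd o2 l1 l2.
apply/eqP; apply: contraT => ne; exfalso.
have dis := cycles_neq_disj H c1 c2 ne.
have neg2 : forall S, S \in cycles g -> odd #|S :&: negs g| -> #|S| = 2%N ->
    forall w, w \in S -> (g ^+ 2)%g (w, true) = (w, false).
  move=> S /cycles_mem[u ->] od cS w wS.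
  rewrite -(cyc_eq H wS) in od cS; exact: two_neg.
apply: (@three_negfix (g ^+ 2)%g (S1 :|: S2) (WBpX 2 H) _ _ (H1 2)).
  by rewrite cardsU dis cards0 l1 l2.
by move=> w /setUP[] wS; [apply: (neg2 S1) | apply: (neg2 S2)].
Qed.

End Parts.

Lemma pick3 (T : finType) (A : {set T}) : (2 < #|A|)%N ->
  exists x y z, [/\ x \in A, y \in A, z \in A & [/\ x != y, x != z & y != z]].
Proof.
move=> cA.
have [x xA] : exists x, x \in A by apply/card_gt0P; lia.
have c1 := cardsD1 x A; rewrite xA /= in c1.
have [y yA] : exists y, y \in A :\ x by apply/card_gt0P; lia.
have c2 := cardsD1 y (A :\ x); rewrite yA /= in c2.
have [z zA] : exists z, z \in A :\ x :\ y by apply/card_gt0P; lia.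
move: yA zA; rewrite !inE => /andP[yx yA] /and3P[zy zx zA].
by exists x, y, z; split => //; split; rewrite // eq_sym.
Qed.

Section Part3.
Variable n : nat.
Implicit Types (g h a b : {perm symb n}) (u v w : 'I_n).
Implicit Types (T S : {set 'I_n}).

Lemma sigma_prod g : WBp g -> \prod_(S in cycles g) sigma_cyc g S = sigma g.
Proof.
move=> H.
have E : sigma g = \prod_(u : 'I_n) sgn (u \in negs g).
  rewrite /sigma (_ : #|negs g| = #|[set: 'I_n] :&: negs g|); last by rewrite setTI.
  rewrite -prod_sgn.
  by apply: eq_bigl => u; rewrite inE.
rewrite E (partition_big (cyc_of g) (mem (cycles g))) /=; last first.
  by move=> u _; apply: imset_f.
apply: eq_bigr => S /cycles_mem[w ->].
rewrite /sigma_cyc -prod_sgn; apply: eq_bigl => u /=.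
apply/idP/eqP => [uS|<-]; last exact: cyc_refl.
exact: cyc_eq.
Qed.

Definition NC g := [set S in cycles g | sigma_cyc g S == -1].

Lemma sigma_cyc_pm g S : sigma_cyc g S != -1 -> sigma_cyc g S = 1.
Proof. by move/eqP; apply: sign_1. Qed.

Lemma NC_even g : WBp g -> sigma g = 1 -> ~~ odd #|NC g|.
Proof.
move=> H s1; rewrite -(sigma_prod H) in s1.
move: s1; rewrite (bigID (fun S => sigma_cyc g S == -1)) /=.
rewrite [X in _ * X]big1; last by move=> S /andP[_ ]; apply: sigma_cyc_pm.
rewrite mulr1 (eq_bigr (fun _ => -1)); last by move=> S /andP[_ /eqP].
rewrite prodr_const.
have -> : #|[pred S | (S \in cycles g) && (sigma_cyc g S == -1)]| = #|NC g|.
  by apply: eq_card => S; rewrite /NC inE.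
by rewrite -signr_odd; case: (odd _).
Qed.

Lemma NCP g S : S \in NC g -> S \in cycles g /\ odd #|S :&: negs g|.
Proof. by rewrite inE => /andP[c /eqP /sign_odd]. Qed.

Lemma NC_le2 g : WBp g -> H1_vanish (<[g]>%G : {set {perm symb n}}) ->
  (#|NC g| <= 2)%N.
Proof.
move=> H H1; rewrite leqNgt; apply/negP => /pick3[S1 [S2 [S3 [S1N S2N S3N [n12 n13 n23]]]]].
rewrite eq_sym in n12; rewrite eq_sym in n13; rewrite eq_sym in n23.
have n21 := n12; have n31 := n13; have n32 := n23.
have [C1 o1] := NCP S1N.
have [C2 o2] := NCP S2N.
have [C3 o3] := NCP S3N.
have d12 := cycles_neq_disj H C2 C1 n21.
have [u1 E1] := cycles_mem C1; have [u2 E2] := cycles_mem C2; have [u3 E3] := cycles_mem C3.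
apply: (@H1_fail n g (S1 :|: S2) u1 u3 H _ _ _ _ _ _ H1).
- by move=> u; rewrite !inE E1 E2 !cyc_tau.
- rewrite setIUl cardsU.
  have -> : S1 :&: negs g :&: (S2 :&: negs g) = set0.
    apply/setP => w; rewrite !inE; apply/negP => /andP[/andP[w1 _] /andP[w2 _]].
    by move/eqP: n21; apply; apply: (cycles_disj H C2 C1 w2 w1).
  rewrite cards0 subn0 oddD.
  by move: o1 o2 => -> ->.
- by rewrite inE E1 cyc_refl.
- rewrite inE negb_or; apply/andP; split; apply/negP => u3S.
    by move/eqP: n31; apply; apply: (cycles_disj H C3 C1 _ u3S); rewrite E3 cyc_refl.
  by move/eqP: n32; apply; apply: (cycles_disj H C3 C2 _ u3S); rewrite E3 cyc_refl.
- by apply: neg_cycle_conn; rewrite // -E1.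
- by apply: neg_cycle_conn; rewrite // -E3.
Qed.

End Part3.

Section Rest.
Variable n : nat.
Implicit Types (g h a b : {perm symb n}) (u v w : 'I_n).
Implicit Types (T S D : {set 'I_n}).

Lemma even_rest g b D : WBp g -> WBp b ->
  (forall u, u \in D -> b (u, true) = (u, true)) ->
  (forall u, u \notin D -> b (u, true) = g (u, true)) ->
  (forall v, (tau g v \in D) = (v \in D)) ->
  (forall S, S \in cycles g -> sigma_cyc g S = -1 -> S \subset D) ->
  all_cyc_even b.
Proof.
move=> Hg Hb bD bND clD negD S /cycles_mem[u ->].
case: (boolP (u \in D)) => uD.
  have tb : tau b u = u by rewrite /tau bD.
  rewrite /sigma_cyc cyc_fixed //.
  have -> : [set u] :&: negs b = set0.
    apply/setP => w; rewrite !inE; apply/negP => /andP[/eqP -> ].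
    by rewrite bD.
  by rewrite cards0.
have tE : forall v, v \notin D -> tau b v = tau g v.
  by move=> v vD; rewrite /tau bND.
have it : forall k, iter k (tau b) u = iter k (tau g) u /\ iter k (tau g) u \notin D.
  elim=> [|k [IH1 IH2]] //=; rewrite IH1 tE //; split => //; by rewrite clD.
have cE : cyc_of b u = cyc_of g u.
  apply/setP => v; rewrite !inE; apply/idP/idP => /iter_findex <-.
    by case: (it (findex (tau b) u v)) => -> _; apply: fconnect_iter.
  by case: (it (findex (tau g) u v)) => <- _; apply: fconnect_iter.
have notD : forall v, v \in cyc_of g u -> v \notin D.
  move=> v; rewrite inE => /iter_findex <-; by case: (it (findex (tau g) u v)).
have nE : cyc_of g u :&: negs b = cyc_of g u :&: negs g.
  apply/setP => v; rewrite !inE; case: (boolP (fconnect (tau g) u v)) => //= uv.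
  by rewrite bND // notD // inE.
rewrite /sigma_cyc cE nE; apply: sigma_cyc_pm; apply/negP => /eqP neg.
have C : cyc_of g u \in cycles g by apply: imset_f.
have := negD _ C neg.
by move/subsetP/(_ u (cyc_refl g u)); rewrite (negbTE uD).
Qed.

Lemma tau_closed g D : WBp g -> (forall d, d \in D -> tau g d \in D) ->
  forall v, (tau g v \in D) = (v \in D).
Proof.
move=> H sub v; apply/idP/idP => [tv|]; last exact: sub.
have E : tau g @: D = D.
  apply/eqP; rewrite eqEcard card_imset; last exact: tau_inj.
  rewrite leqnn andbT; apply/subsetP => x /imsetP[d dD ->]; exact: sub.
by move: tv; rewrite -{1}E => /imsetP[d dD /(tau_inj H) ->].
Qed.

Lemma bP (P g : {perm symb n}) z : ((P^-1 * g)%g (P z)) = g z.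
Proof. by rewrite permM permK. Qed.

Lemma typeB g i1 i2 : WBp g -> i1 != i2 ->
  g (i1, true) = (i1, false) -> g (i2, true) = (i2, false) ->
  (forall S, S \in cycles g -> sigma_cyc g S = -1 -> S \subset [set i1; i2]) ->
  exists b, [/\ b \in WB n, all_cyc_even b, fixes_idx b i1 /\ fixes_idx b i2 &
     g = (cc i1 * cc i2 * b)%g].
Proof.
move=> H n12 g1 g2 negD.
set P := (cc i1 * cc i2)%g.
have HP : WBp P by apply: WBpM; apply: WBp_cc.
set b := (P^-1 * g)%g.
have Hb : WBp b by apply: WBpM => //; apply: WBpV.
have PE : forall u c, P (u, c) = cc i2 (cc i1 (u, c)) by move=> u c; rewrite permM.
have bfix : forall j, b (j, true) = (j, true) -> fixes_idx b j.
  move=> j E; split => //.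
  have -> : ((j, false) : symb n) = flip (j, true) by [].
  by rewrite Hb E.
have b1 : b (i1, true) = (i1, true).
  have E : P (i1, false) = (i1, true) by rewrite PE !ccE eqxx /= (negbTE n12).
  rewrite -{1}E bP; have -> : ((i1, false) : symb n) = flip (i1, true) by [].
  by rewrite H g1.
have b2 : b (i2, true) = (i2, true).
  have E : P (i2, false) = (i2, true).
    by rewrite PE !ccE eqxx eq_sym (negbTE n12).
  rewrite -{1}E bP; have -> : ((i2, false) : symb n) = flip (i2, true) by [].
  by rewrite H g2.
have [t1 _] := negfix H g1; have [t2 _] := negfix H g2.
exists b; split.
- by apply/inWB.
- apply: (@even_rest g b [set i1; i2] H Hb).
  + by move=> u /set2P[] ->.
  + move=> u; rewrite !inE negb_or => /andP[u1 u2].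
    have E : P (u, true) = (u, true) by rewrite PE !ccE (negbTE u1) (negbTE u2).
    by rewrite -{1}E bP.
  + apply: tau_closed => // d /set2P[] ->; rewrite !inE ?t1 ?t2 eqxx ?orbT //.
  + exact: negD.
- by split; apply: bfix.
- by rewrite mulKVg.
Qed.

Lemma typeC g i1 i2 i3 : WBp g -> uniq [:: i1; i2; i3] ->
  g (i1, true) = (i1, false) -> g (i2, true) = (i3, false) ->
  g (i3, true) = (i2, true) ->
  (forall S, S \in cycles g -> sigma_cyc g S = -1 -> S \subset [set i1; i2; i3]) ->
  exists b, [/\ b \in WB n, all_cyc_even b,
     [/\ fixes_idx b i1, fixes_idx b i2 & fixes_idx b i3] &
     g = (cc i1 * cc i2 * sw i2 i3 * b)%g].
Proof.
move=> H U g1 g2 g3 negD.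
move: U; rewrite /= !inE negb_or andbT => /andP[/andP[n12 n13] n23].
have n21 : (i2 == i1) = false by rewrite eq_sym (negbTE n12).
have n31 : (i3 == i1) = false by rewrite eq_sym (negbTE n13).
have n32 : (i3 == i2) = false by rewrite eq_sym (negbTE n23).
set P := (cc i1 * cc i2 * sw i2 i3)%g.
have HP : WBp P by apply: WBpM; [apply: WBpM; apply: WBp_cc | apply: WBp_sw].
set b := (P^-1 * g)%g.
have Hb : WBp b by apply: WBpM => //; apply: WBpV.
have PE : forall u c, P (u, c) = sw i2 i3 (cc i2 (cc i1 (u, c))) by move=> u c; rewrite !permM.
have bfix : forall j, b (j, true) = (j, true) -> fixes_idx b j.
  move=> j E; split => //.
  have -> : ((j, false) : symb n) = flip (j, true) by [].
  by rewrite Hb E.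
have flipF : forall j, ((j, false) : symb n) = flip (j, true) by [].
have b1 : b (i1, true) = (i1, true).
  have E : P (i1, false) = (i1, true).
    by rewrite PE !ccE swE eqxx /= (negbTE n12) (negbTE n13).
  by rewrite -{1}E bP flipF H g1.
have b2 : b (i2, true) = (i2, true).
  have E : P (i3, true) = (i2, true).
    by rewrite PE !ccE swE n31 n32 eqxx.
  by rewrite -{1}E bP g3.
have b3 : b (i3, true) = (i3, true).
  have E : P (i2, false) = (i3, true).
    by rewrite PE !ccE swE n21 eqxx /=.
  by rewrite -{1}E bP flipF H g2.
have t1 : tau g i1 = i1 by rewrite /tau g1.
have t2 : tau g i2 = i3 by rewrite /tau g2.
have t3 : tau g i3 = i2 by rewrite /tau g3.
exists b; split.
- by apply/inWB.
- apply: (@even_rest g b [set i1; i2; i3] H Hb).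
  + by move=> u; rewrite !inE => /orP[/orP[]|] /eqP ->.
  + move=> u; rewrite !inE !negb_or => /andP[/andP[u1 u2] u3].
    have E : P (u, true) = (u, true).
      by rewrite PE !ccE swE (negbTE u1) (negbTE u2) (negbTE u3).
    by rewrite -{1}E bP.
  + apply: tau_closed => // d; rewrite !inE => /orP[/orP[]|] /eqP ->;
      rewrite ?t1 ?t2 ?t3 !eqxx ?orbT //.
  + exact: negD.
- by split; apply: bfix.
- by rewrite mulKVg.
Qed.

End Rest.

Section Final.
Variable n : nat.
Implicit Types (g h b : {perm symb n}) (u v w a : 'I_n).
Implicit Types (T S D : {set 'I_n}).

Lemma one_struct g S : WBp g -> S \in NC g -> #|S| = 1%N ->
  exists u, S = [set u] /\ g (u, true) = (u, false).
Proof.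
move=> H /NCP[/cycles_mem[u ->] od] c1.
exists u.
have [x Ex] : exists x, cyc_of g u = [set x] by apply/cards1P/eqP.
have E : cyc_of g u = [set u].
  by have := cyc_refl g u; rewrite Ex inE => /eqP ->.
have tu : tau g u = u.
  by have := cyc_refl g u; rewrite -(cyc_tau _ _ H) E inE => /eqP.
split => //; rewrite gT // tu; congr (_, _).
move: od; rewrite E; case: (boolP (u \in negs g)) => //= un.
have -> : [set u] :&: negs g = set0.
  apply/setP => w; rewrite in_setI in_set1 in_set0; apply/negP => /andP[/eqP -> ]; exact/negP.
by rewrite cards0.
Qed.

Lemma two_struct' g S : WBp g -> S \in NC g -> #|S| = 2%N ->
  exists a, [/\ S = [set a; tau g a], tau g a != a,
     g (a, true) = (tau g a, false) & g (tau g a, true) = (a, true)].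
Proof.
move=> H /NCP[/cycles_mem[u ->] od] c2.
have [a aSN] : exists a, a \in cyc_of g u :&: negs g.
  by apply/card_gt0P; move: od; case: #|_|.
move: aSN; rewrite inE => /andP[aS aN].
rewrite -(cyc_eq H aS) in od c2 *.
have [ta tta E] := two_struct H c2.
exists a; rewrite E in od *.
move: od; rewrite card2I 1?eq_sym // aN.
case: (boolP (tau g a \in negs g)) => //= taN _.
split => //; first by rewrite eq_sym.
  by rewrite gT // aN.
by rewrite gT // tta (negbTE taN).
Qed.

End Final.

Unset Implicit Arguments.

Theorem corollary4p2 (n : nat) (g : {perm symb n}) :
  g \in WD n ->
  (forall i : nat, H1_vanish (<[(g ^+ i)%g]>%G : {set {perm symb n}})) ->
  (* pr(beta) has length <= 2 when sigma(beta) = -1 *)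
  (forall S, S \in cycles g -> sigma_cyc g S = -1 -> (len_cyc S <= 2)%N) /\
  (* at most one such cycle of length 2 *)
  (forall S1 S2, S1 \in cycles g -> S2 \in cycles g ->
     sigma_cyc g S1 = -1 -> sigma_cyc g S2 = -1 ->
     len_cyc S1 = 2%N -> len_cyc S2 = 2%N -> S1 = S2) /\
  (* up to conjugation in W(B_n), g is of type (1), (2) or (3) *)
  (exists2 h, h \in WB n &
     [\/ exists i1 i2 (b : {perm symb n}),
            [/\ i1 != i2, b \in WB n, all_cyc_even b,
                fixes_idx b i1 /\ fixes_idx b i2 &
                (g ^ h)%g = (cc i1 * cc i2 * b)%g],
         exists i1 i2 i3 (b : {perm symb n}),
            [/\ uniq [:: i1; i2; i3], b \in WB n, all_cyc_even b,
                [/\ fixes_idx b i1, fixes_idx b i2 & fixes_idx b i3] &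
                (g ^ h)%g = (cc i1 * cc i2 * sw i2 i3 * b)%g]
       | exists b : {perm symb n},
            [/\ b \in WB n, all_cyc_even b & (g ^ h)%g = b]]).
Proof.
move=> gD H1.
have [gB s1] : g \in WB n /\ sigma g = 1 by move: gD; rewrite inE => /andP[-> /eqP].
have H : WBp g by apply/inWB.
have P1 : forall S, S \in cycles g -> sigma_cyc g S = -1 -> (#|S| <= 2)%N.
  by move=> S C s; apply: (part1 H H1 C s).
split; [|split].
- exact: P1.
- by move=> S1 S2 C1 C2 s1' s2' l1 l2; apply: (part2 H H1 C1 C2 s1' s2' l1 l2).
have H1g : H1_vanish (<[g]>%G : {set {perm symb n}}) by have := H1 1%N; rewrite expg1.
have le2 := NC_le2 H H1g.
have ev := NC_even H s1.
have inNC : forall S, S \in cycles g -> sigma_cyc g S = -1 -> S \in NC g.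
  by move=> S C s; rewrite inE C s eqxx.
exists 1%g; first by apply/inWB; apply: WBp1.
rewrite conjg1.
have [E|E] : #|NC g| = 0%N \/ #|NC g| = 2%N.
  by move: le2 ev; case: #|NC g| => [|[|[|k]]] //=; auto.
  apply: Or33; exists g; split => // S C; apply: sigma_cyc_pm; apply/negP => /eqP s.
  by move: (inNC S C s); rewrite (cards0_eq E) inE.
have [S1 [S2 [n12 EN]]] : exists S1 S2, S1 != S2 /\ NC g = [set S1; S2].
  by apply/cards2P; rewrite E.
have SN1 : S1 \in NC g by rewrite EN !inE eqxx.
have SN2 : S2 \in NC g by rewrite EN !inE eqxx orbT.
have len : forall S, S \in NC g -> #|S| = 1%N \/ #|S| = 2%N.
  move=> S /[dup] SN /NCP[C od].
  have := P1 S C; rewrite inE in SN; case/andP: SN => _ /eqP s => /(_ s).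
  have : (0 < #|S|)%N by apply/card_gt0P; case/cycles_mem: C => u ->; exists u; exact: cyc_refl.
  by case: #|S| => [|[|[|]]] //; auto.
have negD : forall S, S \in cycles g -> sigma_cyc g S = -1 -> S = S1 \/ S = S2.
  by move=> S C s; have := inNC S C s; rewrite EN => /set2P.
have [C1 _] := NCP SN1; have [C2 _] := NCP SN2.
have dis := cycles_neq_disj H C1 C2 n12.
have caseC : forall Sa Sb, Sa \in cycles g -> Sb \in cycles g -> Sa :&: Sb = set0 ->
    Sa \in NC g -> Sb \in NC g ->
    (forall S, S \in cycles g -> sigma_cyc g S = -1 -> S = Sa \/ S = Sb) ->
    #|Sa| = 1%N -> #|Sb| = 2%N ->
    exists i1 i2 i3 (b : {perm symb n}),
            [/\ uniq [:: i1; i2; i3], b \in WB n, all_cyc_even b,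
                [/\ fixes_idx b i1, fixes_idx b i2 & fixes_idx b i3] &
                g = (cc i1 * cc i2 * sw i2 i3 * b)%g].
  move=> Sa Sb Ca Cb dab Na Nb nD la lb.
  have [i1 [Ea g1]] := one_struct H Na la.
  have [a [Eb ta ga gta]] := two_struct' H Nb lb.
  have i1b : i1 \notin Sb.
    apply/negP => iS; have : i1 \in Sa :&: Sb by rewrite inE Ea set11.
    by rewrite dab inE.
  have U : uniq [:: i1; a; tau g a].
    rewrite /= !inE negb_or andbT [a == _]eq_sym ta andbT.
    by move: i1b; rewrite Eb !inE negb_or.
  have nD' : forall S, S \in cycles g -> sigma_cyc g S = -1 ->
      S \subset [set i1; a; tau g a].
    move=> S C s; case: (nD S C s) => ->; rewrite ?Ea ?Eb.
      by apply/subsetP => x; rewrite !inE => ->.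
    by apply/subsetP => x; rewrite !inE => /orP[] ->; rewrite ?orbT.
  have [b [bB bE bF bg]] := typeC H U g1 ga gta nD'.
  by exists i1, a, (tau g a), b; split.
case: (len S1 SN1) => l1; case: (len S2 SN2) => l2.
-
  apply: Or31.
  have [i1 [E1 g1]] := one_struct H SN1 l1.
  have [i2 [E2 g2]] := one_struct H SN2 l2.
  have n12' : i1 != i2 by apply: contraNneq n12 => e; rewrite E1 E2 e.
  have nD' : forall S, S \in cycles g -> sigma_cyc g S = -1 ->
      S \subset [set i1; i2].
    move=> S C s; case: (negD S C s) => ->; rewrite ?E1 ?E2;
      by apply/subsetP => x; rewrite !inE => ->; rewrite ?orbT.
  have [b [bB bE bF bg]] := typeB H n12' g1 g2 nD'.
  by exists i1, i2, b; split.
- apply: Or32; apply: (caseC S1 S2) => //.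
- apply: Or32; apply: (caseC S2 S1) => //.
  + by rewrite setIC.
  + by move=> S C s; case: (negD S C s); auto.
- by move: (part2 H H1 C1 C2); rewrite !inE in SN1 SN2; case/andP: SN1 => _ /eqP s1';
    case/andP: SN2 => _ /eqP s2' => /(_ s1' s2' l1 l2) e; rewrite e eqxx in n12.
Qed.
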